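(* Let $c$ be a joint choice on $\mathfrak{M}_Q\subseteq\prod_{q\in Q}2^{X_q}$ and let $S_1,\dots,S_m$ be nonempty subsets of $Q$ with $S_1\cap\cdots\cap S_m\neq\emptyset$, such that $c$ is $S_j$-separable for every $j\in\{1,\dots,m\}$. Suppose there is a permutation $\sigma$ of $\{1,\dots,m\}$ such that, for every $k\in\{1,\dots,m-1\}$, $\mathfrak{M}_Q$ satisfies menus betweenness with respect to the pair $S_{\sigma(1)}\cap\cdots\cap S_{\sigma(k)}$ and $S_{\sigma(k+1)}$. Then $c$ is $(S_1\cap\cdots\cap S_m)$-separable.
   Context: Let $Q=\{1,\dots,n\}$ with $n\ge 2$ be a finite set of dimensions. For each $q\in Q$, $X_q$ is a nonempty finite set, and $2^{X_q}$ denotes the family of nonempty subsets of $X_q$. A (multidimensional) menu is a tuple $A_Q=(A_q)_{q\in Q}\in\prod_{q\in Q}2^{X_q}$; its alternatives are the elements $x_Q=(x_q)_{q\in Q}$ of $\prod_{q\in Q}A_q$. Let $\mathfrak{M}_Q\subseteq\prod_{q\in Q}2^{X_q}$ be a nonempty family of menus. A joint choice on $\mathfrak{M}_Q$ is a map $c$ assigning to each $A_Q\in\mathfrak{M}_Q$ a set $c(A_Q)$ with $\emptyset\neq c(A_Q)\subseteq\prod_{q\in Q}A_q$. For nonempty $S\subseteq Q$, write $-S=Q\setminus S$, $x_S=(x_q)_{q\in S}$, and $\pi_S$ for the projection $x_Q\mapsto x_S$ from $\prod_{q\in Q}X_q$ to $\prod_{q\in S}X_q$, extended to sets of alternatives by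 taking images, and to menus by $\pi_S(A_Q)=A_S:=(A_q)_{q\in S}$; set $\pi_S(\mathfrak{M}_Q)=\{\pi_S(A_Q):A_Q\in\mathfrak{M}_Q\}$. For $A_S=(A_q)_{q\in S}$ and $B_{-S}=(B_q)_{q\in -S}$, $(A_S,B_{-S})$ denotes the menu whose $q$-component is $A_q$ for $q\in S$ and $B_q$ for $q\in -S$. A joint choice $c$ on $\mathfrak{M}_Q$ is $S$-separable (for nonempty $S\subseteq Q$) if $\pi_S(c(A_S,B_{-S}))=\pi_S(c(A_S,C_{-S}))$ for all $A_S\in\pi_S(\mathfrak{M}_Q)$ and $B_{-S},C_{-S}\in\pi_{-S}(\mathfrak{M}_Q)$ such that $(A_S,B_{-S}),(A_S,C_{-S})\in\mathfrak{M}_Q$ (for $S=Q$ this condition is vacuous). For nonempty $S,T\subseteq Q$, the family $\mathfrak{M}_Q$ satisfies menus betweenness with respect to $S$ and $T$ if for all $A_Q,B_Q\in\mathfrak{M}_Q$ with $\pi_{S\cap T}(A_Q)=\pi_{S\cap T}(B_Q)$ there is $E_Q\in\mathfrak{M}_Q$ with $\pi_S(E_Q)=\pi_S(A_Q)$ and $\pi_T(E_Q)=\pi_T(B_Q)$. *)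

(* Defs.v *)
From mathcomp Require Import all_boot all_fingroup.
Set Implicit Arguments. Unset Strict Implicit. Unset Printing Implicit Defensive.

Section Defs.
Variables (n : nat) (X : 'I_n -> finType).

Definition alt := {dffun forall q : 'I_n, X q}.
(* menus A_Q = (A_q)_q, with A_q a subset of X_q (nonemptiness imposed separately) *)
Definition menu := {dffun forall q : 'I_n, {set X q}}.

Definition menu_ok (A : menu) : Prop := forall q, A q != set0.

Definition in_menu (A : menu) (x : alt) : bool := [forall q, x q \in A q].

(* partial alternative x_S, encoded as Some (x q) for q in S and None elsewhere *)
Definition palt := {dffun forall q : 'I_n, option (X q)}.
Definition proj (S : {set 'I_n}) (x : alt) : palt :=
  [ffun q => if q \in S then Some (x q) else None].
Definition proj_set (S : {set 'I_n}) (P : {set alt}) : {set palt} :=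
  [set proj S x | x in P].

Definition agree_on (S : {set 'I_n}) (A B : menu) : Prop :=
  forall q, q \in S -> A q = B q.

Definition glue (S : {set 'I_n}) (A B : menu) : menu :=
  [ffun q => if q \in S then A q else B q].

Definition joint_choice (M : {set menu}) (c : menu -> {set alt}) : Prop :=
  forall A, A \in M -> c A != set0 /\ (forall x, x \in c A -> in_menu A x).

(* S-separability.  A_S ranges over pi_S(M) (represented by a menu A whose
   S-part is in pi_S(M)), B_{-S}, C_{-S} over pi_{-S}(M). *)
Definition separable (M : {set menu}) (c : menu -> {set alt})
    (S : {set 'I_n}) : Prop :=
  forall A B C : menu,
    (exists2 D, D \in M & agree_on S A D) ->
    (exists2 D, D \in M & agree_on (~: S) B D) ->
    (exists2 D, D \in M & agree_on (~: S) C D) ->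
    glue S A B \in M -> glue S A C \in M ->
    proj_set S (c (glue S A B)) = proj_set S (c (glue S A C)).

Definition menus_betweenness (M : {set menu}) (S T : {set 'I_n}) : Prop :=
  forall A B, A \in M -> B \in M -> agree_on (S :&: T) A B ->
    exists2 E, E \in M & agree_on S E A /\ agree_on T E B.

End Defs.

(* Main.v *)
Require Import Defs.
From mathcomp Require Import all_boot all_fingroup.
Set Implicit Arguments. Unset Strict Implicit. Unset Printing Implicit Defensive.

Section Aux.
Variables (n : nat) (X : 'I_n -> finType).

Definition sep' (M : {set menu X}) (c : menu X -> {set alt X}) (S : {set 'I_n}) :=
  forall P Q, P \in M -> Q \in M -> agree_on S P Q ->
    proj_set S (c P) = proj_set S (c Q).

Lemma proj_sub1 (S T : {set 'I_n}) (P Q : {set alt X}) :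
  T \subset S -> proj_set S P = proj_set S Q -> proj_set T P \subset proj_set T Q.
Proof.
move=> sub E; apply/subsetP => z /imsetP [x xP ->].
have : proj S x \in proj_set S Q by rewrite -E; apply: imset_f.
case/imsetP => y yQ e; apply/imsetP; exists y => //.
apply/ffunP => q; rewrite !ffunE; case: ifP => qT //.
have qS := subsetP sub q qT.
by move/ffunP: e => /(_ q); rewrite !ffunE qS.
Qed.

Lemma proj_sub (S T : {set 'I_n}) (P Q : {set alt X}) :
  T \subset S -> proj_set S P = proj_set S Q -> proj_set T P = proj_set T Q.
Proof.
move=> sub E; apply/eqP; rewrite eqEsubset !(proj_sub1 sub) //.
Qed.

Lemma sep'_of_sep M c S : separable M c S -> sep' M c S.
Proof.
move=> H P Q PM QM ag.
have e1 : glue S P P = P by apply/ffunP => q; rewrite ffunE; case: ifP.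
have e2 : glue S P Q = Q.
  by apply/ffunP => q; rewrite ffunE; case: ifP => // qS; rewrite ag.
rewrite -{1}e1 -e2; apply: H; rewrite ?e1 ?e2 //.
- by exists P.
- by exists P.
- by exists Q.
Qed.

Lemma sep_of_sep' M c S : sep' M c S -> separable M c S.
Proof.
move=> H A B C _ _ _ h1 h2; apply: H => // q qS.
by rewrite !ffunE qS.
Qed.

Lemma sep'_meet M c S T : sep' M c S -> sep' M c T ->
  menus_betweenness M S T -> sep' M c (S :&: T).
Proof.
move=> hS hT hB P R PM RM ag.
have [E EM [aS aT]] := hB P R PM RM ag.
rewrite (proj_sub (subsetIl S T) (hS P E PM EM _)); last by move=> q qS; rewrite aS.
exact: (proj_sub (subsetIr S T) (hT E R EM RM aT)).
Qed.

Lemma sep'_T M c : sep' M c [set: 'I_n].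
Proof.
move=> P Q _ _ ag; have -> // : P = Q.
by apply/ffunP => q; rewrite ag ?in_setT.
Qed.

End Aux.

Theorem mainTheorem4 (n : nat) (X : 'I_n -> finType)
  (M : {set menu X}) (c : menu X -> {set alt X})
  (m : nat) (S : 'I_m -> {set 'I_n}) (sigma : {perm 'I_m}) :
  1 < n ->
  (forall q, 0 < #|X q|) ->
  M != set0 ->
  (forall A, A \in M -> menu_ok A) ->
  joint_choice M c ->
  0 < m ->
  (forall j, S j != set0) ->
  \bigcap_(j < m) S j != set0 ->
  (forall j, separable M c (S j)) ->
  (forall k : 'I_m, 1 <= k ->
     menus_betweenness M (\bigcap_(i < m | i < k) S (sigma i)) (S (sigma k))) ->
  separable M c (\bigcap_(j < m) S j).
Proof.
move=> _ _ _ _ _ _ _ _ hsep hB.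
apply: sep_of_sep'.
have key : forall k, k <= m -> sep' M c (\bigcap_(i < m | i < k) S (sigma i)).
  elim=> [|k IH] km.
    rewrite big_pred0; first exact: sep'_T.
    by move=> i; rewrite ltn0.
  have hstep : forall k' : 'I_m, val k' = k ->
      \bigcap_(i < m | i < k.+1) S (sigma i) =
      S (sigma k') :&: \bigcap_(i < m | i < k) S (sigma i).
    move=> k' ek; rewrite (bigD1 k') /=; last by rewrite ek.
    congr (_ :&: _); apply: eq_bigl => i /=.
    by rewrite ltnS leq_eqVlt -val_eqE /= ek; case: (ltngtP i k).
  rewrite (hstep (Ordinal km)) // setIC.
  case: k IH km hstep => [|k] IH km _.
    rewrite big_pred0; last by move=> i; rewrite ltn0.
    by rewrite setTI; apply: sep'_of_sep.
  apply: sep'_meet; first exact: IH (ltnW km).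
    exact: sep'_of_sep.
  exact: (hB (Ordinal km) isT).
have := key m (leqnn m).
rewrite (eq_bigl (fun _ => true)); last by move=> i; rewrite ltn_ord.
have -> // : \bigcap_(i < m) S (sigma i) = \bigcap_(j < m) S j.
by rewrite [RHS](reindex_inj (@perm_inj _ sigma)).
Qed.
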